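(* Let $Z$ be a $d\times d$ complex matrix which is not normal, i.e. $[Z,Z^\dagger]\neq 0$. Define the $2d\times 2d$ matrix $$Q(Z)=\begin{pmatrix}\mathbb 1 & Z\\ Z^\dagger & Z^\dagger Z\end{pmatrix},$$ viewed as an operator on $\mathbb C^d\otimes\mathbb C^2$. Then $Q(Z)$ is positive semidefinite and (after normalization) is an entangled, i.e. non-separable, state on $\mathbb C^d\otimes\mathbb C^2$.
   Context: A positive semidefinite operator on a bipartite space is separable if it is a nonnegative combination of tensor products of positive semidefinite operators; otherwise it is entangled. *)

(* Defs.v *)
(* Complex numbers: an arbitrary numClosedFieldType C
   (algebraically closed field with conjugation, e.g. algC or C itself). *)
From HB Require Import structures.
From mathcomp Require Import all_boot all_order all_algebra.
Set Implicit Arguments. Unset Strict Implicit. Unset Printing Implicit Defensive.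
Import Order.TTheory GRing.Theory Num.Theory.
Local Open Scope ring_scope.

Export spectral.
Local Open Scope sesquilinear_scope.

(* Identification of the index set of C^m (x) C^n with 'I_(m*n),
   the canonical MathComp one (inverse of mxvec_index). *)
Definition bidx (m n : nat) (k : 'I_(m * n)) : 'I_m * 'I_n :=
  enum_val (cast_ord (esym (mxvec_cast m n)) k).

Definition kron {C : numClosedFieldType} (m n : nat)
    (A : 'M[C]_m) (B : 'M[C]_n) : 'M[C]_(m * n) :=
  \matrix_(k, l) (A (bidx k).1 (bidx l).1 * B (bidx k).2 (bidx l).2).

Definition psd {C : numClosedFieldType} (n : nat) (A : 'M[C]_n) : Prop :=
  A ^t* = A /\ forall v : 'cV[C]_n, 0 <= (v ^t* *m A *m v) 0 0.

Definition separable {C : numClosedFieldType} (m n : nat)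
    (X : 'M[C]_(m * n)) : Prop :=
  exists (K : nat) (p : 'I_K -> C) (A : 'I_K -> 'M[C]_m) (B : 'I_K -> 'M[C]_n),
    (forall k, 0 <= p k /\ psd (A k) /\ psd (B k)) /\
    X = \sum_(k < K) p k *: kron (A k) (B k).

Definition entangled {C : numClosedFieldType} (m n : nat)
    (X : 'M[C]_(m * n)) : Prop := psd X /\ ~ separable X.

Definition Qblock {C : numClosedFieldType} (d : nat) (Z : 'M[C]_d)
    (a b : 'I_2) : 'M[C]_d :=
  if val a == 0%N then (if val b == 0%N then 1%:M else Z)
  else (if val b == 0%N then Z ^t* else Z ^t* *m Z).

Definition Qmx {C : numClosedFieldType} (d : nat) (Z : 'M[C]_d) : 'M[C]_(d * 2) :=
  \matrix_(k, l) Qblock Z (bidx k).2 (bidx l).2 (bidx k).1 (bidx l).1.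

(* Main.v *)
Require Import Defs.
From HB Require Import structures.
From mathcomp Require Import all_boot all_order all_algebra ring.
Set Implicit Arguments. Unset Strict Implicit.
Import Order.TTheory GRing.Theory Num.Theory.
Local Open Scope ring_scope.
Local Open Scope sesquilinear_scope.

Section S.
Variable C : numClosedFieldType.

Lemma bidx_rk m n (i : 'I_m) (a : 'I_n) : bidx (mxvec_index i a) = (i, a).
Proof. by rewrite /bidx /mxvec_index cast_ordK enum_rankK. Qed.

Lemma rk_bidx m n (k : 'I_(m * n)) : mxvec_index (bidx k).1 (bidx k).2 = k.
Proof. by case: (mxvec_indexP k) => i j; rewrite bidx_rk. Qed.

Lemma sum_dx m n (F : 'I_(m * n) -> C) :
  \sum_k F k = \sum_i \sum_a F (mxvec_index i a).
Proof.
rewrite pair_bigA /=.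
rewrite (reindex (fun p : 'I_m * 'I_n => mxvec_index p.1 p.2)) //=.
exists (@bidx m n) => [[i a] _|k _]; first by rewrite bidx_rk.
by rewrite rk_bidx.
Qed.

Definition qf n (u : 'cV[C]_n) (M : 'M[C]_n) (w : 'cV[C]_n) :=
  (u ^t* *m M *m w) 0 0.
Definition sf n (u : 'cV[C]_n) (M : 'M[C]_n) (w : 'cV[C]_n) :=
  \sum_i \sum_j (u i 0)^* * M i j * w j 0.

Lemma qfE n u M w : @qf n u M w = sf u M w.
Proof.
rewrite /qf /sf mxE; under eq_bigr do rewrite mxE big_distrl /=.
rewrite exchange_big /=; apply eq_bigr => i _; apply eq_bigr => j _.
by rewrite !mxE.
Qed.

Lemma sf_lin n (x y : 'cV[C]_n) A c0 c1 :
  sf (c0 *: x + c1 *: y) A (c0 *: x + c1 *: y) =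
  c0^* * c0 * sf x A x + c0^* * c1 * sf x A y + c1^* * c0 * sf y A x
  + c1^* * c1 * sf y A y.
Proof.
rewrite /sf !mulr_sumr -!big_split; apply eq_bigr => i _.
rewrite !mulr_sumr -!big_split; apply eq_bigr => j _.
rewrite !mxE rmorphD !rmorphM /=; ring.
Qed.

Lemma adjM m n p (A : 'M[C]_(m, n)) (B : 'M[C]_(n, p)) :
  (A *m B) ^t* = B ^t* *m A ^t*.
Proof. by rewrite trmx_mul map_mxM. Qed.

Lemma adjE m n (A : 'M[C]_(m, n)) i j : (A ^t*) i j = (A j i)^*.
Proof. by rewrite !mxE. Qed.

Lemma mxDij m n (A B : 'M[C]_(m, n)) i j : (A + B) i j = A i j + B i j.
Proof. by rewrite mxE. Qed.

Lemma qf_delta n (H : 'M[C]_n) i j :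
  sf (delta_mx i 0) H (delta_mx j 0) = H i j.
Proof.
rewrite -qfE /qf.
have -> : (delta_mx i 0 : 'cV[C]_n) ^t* = delta_mx 0 i.
  apply/matrixP => a b; rewrite !mxE.
  by rewrite conjC_nat andbC.
by rewrite -(rowE i H) -colE !mxE.
Qed.

Definition q2 (b00 b01 b10 b11 c0 c1 : C) :=
  c0^* * b00 * c0 + c0^* * b01 * c1 + c1^* * b10 * c0 + c1^* * b11 * c1.

Lemma q2_10 b00 b01 b10 b11 : q2 b00 b01 b10 b11 1 0 = b00.
Proof. by rewrite /q2 conjC1 conjC0; ring. Qed.
Lemma q2_01 b00 b01 b10 b11 : q2 b00 b01 b10 b11 0 1 = b11.
Proof. by rewrite /q2 conjC1 conjC0; ring. Qed.

Lemma off0 (b00 b01 b10 b11 : C) :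
  b10 = b01^* -> 0 <= b11 ->
  (forall c0 c1, 0 <= q2 b00 b01 b10 b11 c0 c1) ->
  b00 = 0 -> b01 = 0.
Proof.
move=> h10 h11 hq h00; case: (eqVneq b01 0) => // nz.
have nz10 : b10 != 0 by rewrite h10 conjC_eq0.
have c11 : (b11 + 1)^* = b11 + 1.
  by apply: geC0_conj; apply: addr_ge0.
have c10 : b10^* = b01 by rewrite h10 conjCK.
have := hq (- (b11 + 1) / b10) 1.
have -> : q2 b00 b01 b10 b11 (- (b11 + 1) / b10) 1 = - (b11 + 2).
  rewrite /q2 h00 rmorphM rmorphN /= fmorphV /= c11 c10 conjC1.
  by field; apply/andP.
rewrite oppr_ge0 => h.
have : 0 < b11 + 2 by apply: ltr_wpDl.
by move=> p; have := lt_le_trans p h; rewrite ltxx.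
Qed.

Lemma tr2 (b00 b01 b10 b11 g00 g01 g10 g11 : C) :
  b10 = b01^* ->
  (forall c0 c1, 0 <= q2 b00 b01 b10 b11 c0 c1) ->
  (forall c0 c1, 0 <= q2 g00 g01 g10 g11 c0 c1) ->
  0 <= b00 * g00 + b11 * g11 + b10 * g01 + b01 * g10.
Proof.
move=> h10 hB hG.
have hb00 := hB 1 0; rewrite q2_10 in hb00.
have hb11 := hB 0 1; rewrite q2_01 in hb11.
have hg11 := hG 0 1; rewrite q2_01 in hg11.
have c10 : b10^* = b01 by rewrite h10 conjCK.
have c00 : b00^* = b00 by apply: geC0_conj.
case: (eqVneq b00 0) => [z|nz].
  have z01 := off0 h10 hb11 hB z.
  rewrite z z01 h10 z01 conjC0 !mul0r !addr0 add0r.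
  exact: mulr_ge0.
have p00 : 0 < b00 by rewrite lt_def nz hb00.
have hdet : 0 <= b00 * b11 - b01 * b10.
  rewrite -(pmulr_rge0 _ p00).
  have := hB (- b01) b00.
  by rewrite /q2 rmorphN /= -h10 c00 => h; congr (_ <= _): h; ring.
rewrite -(pmulr_rge0 _ p00).
have := hG b00 b10.
rewrite /q2 c00 c10 => h.
have -> : b00 * (b00 * g00 + b11 * g11 + b10 * g01 + b01 * g10) =
  (b00 * g00 * b00 + b00 * g01 * b10 + b01 * g10 * b00 + b01 * g11 * b10)
  + (b00 * b11 - b01 * b10) * g11 by ring.
by apply: addr_ge0 => //; apply: mulr_ge0.
Qed.

Definition i1 : 'I_2 := @Ordinal 2 1 isT.

Lemma sum2 (F : 'I_2 -> C) : \sum_i F i = F ord0 + F i1.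
Proof.
rewrite !big_ord_recl big_ord0 addr0; congr (_ + F _); exact: val_inj.
Qed.

Lemma big4 d (F : 'I_d -> 'I_2 -> 'I_d -> 'I_2 -> C) :
  \sum_i \sum_a \sum_j \sum_b F i a j b = \sum_a \sum_b \sum_i \sum_j F i a j b.
Proof.
rewrite exchange_big; apply eq_bigr => a _.
rewrite (eq_bigr (fun i => \sum_b \sum_j F i a j b)); last first.
  by move=> i _; rewrite exchange_big.
by rewrite exchange_big.
Qed.

Lemma adjD m n (A B : 'M[C]_(m, n)) : (A + B) ^t* = A ^t* + B ^t*.
Proof. by rewrite linearD map_mxD. Qed.
Lemma adjN m n (A : 'M[C]_(m, n)) : (- A) ^t* = - A ^t*.
Proof. by rewrite linearN map_mxN. Qed.
Lemma adjB m n (A B : 'M[C]_(m, n)) : (A - B) ^t* = A ^t* - B ^t*.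
Proof. by rewrite adjD adjN. Qed.
Lemma adjZ m n c (A : 'M[C]_(m, n)) : (c *: A) ^t* = c^* *: A ^t*.
Proof. by rewrite linearZ map_mxZ. Qed.

Lemma psd_tr n (A : 'M[C]_n) : psd A -> 0 <= \tr A.
Proof.
move=> [_ hA]; apply: sumr_ge0 => i _.
by rewrite -qf_delta -qfE; apply: hA.
Qed.

Lemma psd_scale n c (A : 'M[C]_n) : 0 <= c -> psd A -> psd (c *: A).
Proof.
move=> c0 [hh hA]; split; first by rewrite adjZ hh geC0_conj.
move=> v; rewrite -scalemxAr -scalemxAl mxE; exact: mulr_ge0.
Qed.

Definition W d (x y : 'cV[C]_d) (X : 'M[C]_(d * 2)) :=
  \sum_(a < 2) \sum_(b < 2) \sum_i \sum_j
    ((if val a == 0%N then x else y) i 0)^* * X (mxvec_index i b) (mxvec_index j a)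
    * ((if val b == 0%N then x else y) j 0).

Lemma W_lin d x y (X Y : 'M[C]_(d * 2)) c : W x y (X + c *: Y) = W x y X + c * W x y Y.
Proof.
rewrite /W mulr_sumr -big_split; apply eq_bigr => a _.
rewrite mulr_sumr -big_split; apply eq_bigr => b _.
rewrite mulr_sumr -big_split; apply eq_bigr => i _.
rewrite mulr_sumr -big_split; apply eq_bigr => j _.
rewrite !mxE /=; ring.
Qed.

Lemma W0 d x y : W x y (0 : 'M[C]_(d * 2)) = 0.
Proof.
by rewrite /W big1 // => a _; rewrite big1 // => b _; rewrite big1 // => i _;
  rewrite big1 // => j _; rewrite mxE mulr0 mul0r.
Qed.

Lemma W_sum d x y K (p : 'I_K -> C) (M : 'I_K -> 'M[C]_(d * 2)) :
  W x y (\sum_(k < K) p k *: M k) = \sum_(k < K) p k * W x y (M k).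
Proof.
elim: K p M => [|K IH] p M; first by rewrite !big_ord0 W0.
by rewrite !big_ord_recr /= W_lin IH.
Qed.

Lemma W_kron d x y (A : 'M[C]_d) (B : 'M[C]_2) :
  psd A -> psd B -> 0 <= W x y (kron A B).
Proof.
move=> hA [hBh hBq].
pose u := fun a : 'I_2 => if val a == 0%N then x else y.
have -> : W x y (kron A B) = \sum_a \sum_b B b a * sf (u a) A (u b).
  apply eq_bigr => a _; apply eq_bigr => b _; rewrite /sf mulr_sumr.
  apply eq_bigr => i _; rewrite mulr_sumr; apply eq_bigr => j _.
  by rewrite /kron mxE !bidx_rk /=; ring.
rewrite !sum2 /u /=.
have h1 : B i1 ord0 = (B ord0 i1)^* by rewrite -{1}hBh adjE.
have h2 : forall c0 c1, 0 <= q2 (B ord0 ord0) (B ord0 i1) (B i1 ord0) (B i1 i1) c0 c1.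
  move=> c0 c1.
  pose v : 'cV[C]_2 := \col_k (if val k == 0%N then c0 else c1).
  have : 0 <= qf v B v := hBq v.
  rewrite qfE /sf !sum2 !mxE /= => h; congr (_ <= _): h; rewrite /q2; ring.
have h3 : forall c0 c1, 0 <= q2 (sf x A x) (sf x A y) (sf y A x) (sf y A y) c0 c1.
  move=> c0 c1.
  have : 0 <= qf (c0 *: x + c1 *: y) A (c0 *: x + c1 *: y) := hA.2 _.
  by rewrite qfE sf_lin /q2 => h; congr (_ <= _): h; ring.
have := tr2 h1 h2 h3 => h; congr (_ <= _): h; ring.
Qed.

Lemma Qmx_rk d (Z : 'M[C]_d) i a j b :
  Qmx Z (mxvec_index i a) (mxvec_index j b) = Qblock Z a b i j.
Proof. by rewrite mxE !bidx_rk. Qed.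

Lemma W_Q d (Z : 'M[C]_d) x y :
  W x y (Qmx Z) = sf x 1%:M x + sf x (Z ^t*) y + sf y Z x + sf y (Z ^t* *m Z) y.
Proof.
rewrite /W !sum2 /= !addrA /sf.
by congr (_ + _ + _ + _); apply eq_bigr => i _; apply eq_bigr => j _;
  rewrite Qmx_rk /Qblock /=.
Qed.

Lemma Q_quad d (Z : 'M[C]_d) (v : 'cV[C]_(d * 2)) :
  qf v (Qmx Z) v = sf (\col_i v (mxvec_index i ord0) 0) 1%:M (\col_i v (mxvec_index i ord0) 0)
   + sf (\col_i v (mxvec_index i ord0) 0) Z (\col_i v (mxvec_index i i1) 0)
   + sf (\col_i v (mxvec_index i i1) 0) (Z ^t*) (\col_i v (mxvec_index i ord0) 0)
   + sf (\col_i v (mxvec_index i i1) 0) (Z ^t* *m Z) (\col_i v (mxvec_index i i1) 0).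
Proof.
rewrite qfE /sf sum_dx.
under eq_bigr do under eq_bigr do rewrite sum_dx.
rewrite big4 !sum2 !addrA.
by congr (_ + _ + _ + _); apply eq_bigr => i _; apply eq_bigr => j _;
  rewrite Qmx_rk /Qblock /= !mxE.
Qed.

Lemma qf1_ge0 n (w : 'cV[C]_n) : 0 <= qf w 1%:M w.
Proof.
rewrite /qf mulmx1 mxE; apply: sumr_ge0 => i _.
by rewrite adjE mulrC mul_conjC_ge0.
Qed.

Lemma Q_psd d (Z : 'M[C]_d) : psd (Qmx Z).
Proof.
split.
  apply/matrixP => k l; case: (mxvec_indexP k) => i a.
  case: (mxvec_indexP l) => j b; rewrite adjE !Qmx_rk /Qblock.
  case: a => [[|[|//]] ?]; case: b => [[|[|//]] ?] /=.
  - by rewrite !mxE conjC_nat eq_sym.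
  - by rewrite adjE conjCK.
  - by rewrite adjE.
  - by rewrite -adjE adjM trmxCK.
move=> v; rewrite -/(qf v (Qmx Z) v) Q_quad -!qfE.
set x := \col_i _; set y := \col_i _.
have -> : qf x 1%:M x + qf x Z y + qf y (Z ^t*) x + qf y (Z ^t* *m Z) y =
  qf (x + Z *m y) 1%:M (x + Z *m y).
  rewrite /qf -!mxDij; congr (_ 0 0).
  rewrite adjD adjM !mulmx1 !mulmxDl !mulmxDr !mulmxA.
  by rewrite !addrA.
exact: qf1_ge0.
Qed.

Lemma W_wit d (Z : 'M[C]_d) y :
  W (- (Z ^t* *m y)) y (Qmx Z) = qf y (Z ^t* *m Z - Z *m Z ^t*) y.
Proof.
rewrite W_Q -!qfE /qf -!mxDij; congr (_ 0 0).
rewrite adjN adjM trmxCK mulmx1 !mulNmx !mulmxN opprK !mulmxA mulmxBr mulmxBl !mulmxA.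
by rewrite subrr add0r addrC.
Qed.

Lemma psd0 n (H : 'M[C]_n) : H ^t* = H -> \tr H = 0 ->
  (forall y, 0 <= qf y H y) -> H = 0.
Proof.
move=> hh htr hq.
have hd : forall i, H i i = 0.
  move=> i; apply: (@psumr_eq0P _ _ predT (fun i => H i i)) => // j _.
  by rewrite -qf_delta -qfE; exact: hq.
apply/matrixP => i j; rewrite [RHS]mxE.
apply: (@off0 (H i i) (H i j) (H j i) (H j j)).
- by rewrite -{1}hh adjE.
- by rewrite hd.
- move=> c0 c1.
  have : 0 <= qf (c0 *: delta_mx i 0 + c1 *: delta_mx j 0) H
                 (c0 *: delta_mx i 0 + c1 *: delta_mx j 0) := hq _.
  by rewrite qfE sf_lin !qf_delta /q2 => h; congr (_ <= _): h; ring.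
- exact: hd.
Qed.
End S.

Lemma W_scale (C : numClosedFieldType) d (x y : 'cV[C]_d) c (M : 'M[C]_(d * 2)) :
  W x y (c *: M) = c * W x y M.
Proof. by rewrite -[c *: M]add0r W_lin W0 add0r. Qed.

Theorem mainTheorem2 (C : numClosedFieldType) (d : nat) (Z : 'M[C]_d)
    (hZ : Z \isn't normalmx) :
  psd (Qmx Z) /\ entangled ((\tr (Qmx Z))^-1 *: Qmx Z).
Proof.
have hQ := Q_psd Z; split => //.
set c := \tr (Qmx Z).
have c0 : 0 <= c := psd_tr hQ.
have d0 : (0 < d)%N.
  case: d Z hZ {hQ c c0} => // Z hZ.
  case/negP: hZ; apply/normalmxP; by rewrite [LHS]flatmx0 [RHS]flatmx0.
have cpos : 0 < c.
  pose i0 : 'I_d := Ordinal d0.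
  rewrite /c /mxtrace (bigD1 (mxvec_index i0 ord0)) //= Qmx_rk /Qblock /= mxE eqxx.
  apply: ltr_pwDl; first exact: ltr01.
  apply: sumr_ge0 => k _.
  by rewrite -qf_delta -qfE; exact: hQ.2.
split; first by apply: psd_scale => //; rewrite invr_ge0.
move=> [K [p [A [B [hpos heq]]]]].
have hH : Z ^t* *m Z - Z *m Z ^t* = 0.
  apply: psd0.
  - by rewrite adjB !adjM trmxCK.
  - by rewrite linearB /= mxtrace_mulC subrr.
  - move=> y; rewrite -W_wit.
    have -> : Qmx Z = c *: (c^-1 *: Qmx Z).
      by rewrite scalerA divff ?lt0r_neq0 // scale1r.
    rewrite heq W_scale W_sum; apply: mulr_ge0 => //.
    apply: sumr_ge0 => k _; have [pk [hA hB]] := hpos k.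
    by apply: mulr_ge0 => //; apply: W_kron.
case/negP: hZ; apply/normalmxP; symmetry; exact: subr0_eq hH.
Qed.
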